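(* Consider the planted $k$-factor model with $k$ fixed and $p=\lambda/n$, where $\lambda=\lambda_n$ may depend on $n$, and condition on any realization of $H^*$. (i) If $\lambda=o(1)$, then with probability $1-o(1)$ the planted graph $H^*$ is the unique $k$-factor contained in $G$. (ii) If $\lambda=\Omega(1)$ (i.e. $\lambda_n\ge c_0>0$ for all large $n$), then there is a constant $c>0$ such that for all large $n$, with probability at least $c$ the graph $G$ contains a $k$-factor $H\neq H^*$.
   Context: Planted $k$-factor model: fix an integer $k\ge1$ and $n$ with $kn$ even. A $k$-factor on $[n]$ is a $k$-regular simple graph with vertex set $[n]$, identified with its edge set; $\mathcal H$ is the set of all $k$-factors on $[n]$. Let $p=\lambda/n\in[0,1]$. Draw $H^*$ uniformly at random from $\mathcal H$ and, independently, $G_0\sim\mathcal G(n,p)$ (each of the $\binom n2$ vertex pairs is an edge independently with probability $p$). The observed graph is $G=G_0\cup H^*$ (union of edge sets). A $k$-factor $H$ is ''contained in $G$'' if $H\subseteq E(G)$. Asymptotics are as $n\to\infty$ with $k$ fixed. *)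

(* Defs.v *)
From mathcomp Require Import all_boot all_order all_algebra.
From mathcomp Require Import reals.
Set Implicit Arguments. Unset Strict Implicit. Unset Printing Implicit Defensive.
Import Order.TTheory GRing.Theory Num.Theory.
Local Open Scope ring_scope.

(* Vertex set [n] = 'I_n; an (undirected) vertex pair / potential edge is a
   2-element subset of 'I_n; a simple graph on [n] is identified with its
   edge set, a subset of [edges n]. *)
Definition edges (n : nat) : {set {set 'I_n}} := [set e : {set 'I_n} | #|e| == 2%N].

Definition is_kfactor (n k : nat) (H : {set {set 'I_n}}) : bool :=
  (H \subset edges n) && [forall v : 'I_n, #|[set e in H | v \in e]| == k].

Definition gnp_prob (R : realType) (n : nat) (p : R)
    (A : pred {set {set 'I_n}}) : R :=
  \sum_(S : {set {set 'I_n}} | (S \subset edges n) && A S)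
     p ^+ #|S| * (1 - p) ^+ (#|edges n| - #|S|).

(* Event (in terms of G0) that G = G0 ∪ Hs contains a k-factor H <> Hs. *)
Definition other_kfactor (n k : nat) (Hs : {set {set 'I_n}})
    (G0 : {set {set 'I_n}}) : bool :=
  [exists H : {set {set 'I_n}},
     [&& is_kfactor k H, H != Hs & H \subset G0 :|: Hs]].

(* Main.v *)
Require Import Defs.
From mathcomp Require Import all_boot all_order all_algebra.
From mathcomp Require Import reals.
From mathcomp Require Import ring lra zify.
Set Implicit Arguments. Unset Strict Implicit. Unset Printing Implicit Defensive.
Import Order.TTheory GRing.Theory Num.Theory.

Local Open Scope ring_scope.

Section Prob.
Variables (R : realType) (n : nat) (p : R).

Definition wgt (S : {set {set 'I_n}}) : R :=
  p ^+ #|S| * (1 - p) ^+ (#|edges n| - #|S|).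
Definition Ex (f : {set {set 'I_n}} -> R) : R :=
  \sum_(S : {set {set 'I_n}} | S \subset edges n) wgt S * f S.

Lemma gnpE (A : pred {set {set 'I_n}}) : gnp_prob p A = Ex (fun S => (A S)%:R).
Proof.
rewrite /gnp_prob /Ex big_mkcondr /=; apply: eq_bigr => S _.
by case: (A S); rewrite ?mulr1 ?mulr0.
Qed.

Lemma sum_subsets_card (T : finType) (A : {set T}) (g : nat -> R) :
  \sum_(B : {set T} | B \subset A) g #|B| = \sum_(i < #|A|.+1) 'C(#|A|, i)%:R * g i.
Proof.
rewrite (eq_bigr (fun B : {set T} => \sum_(i < #|A|.+1 | #|B| == i) g i)); last first.
  move=> B sBA; have lt : (#|B| < #|A|.+1)%N by rewrite ltnS subset_leq_card.
  by rewrite (big_pred1 (Ordinal lt)) // => i; rewrite -val_eqE /= eq_sym.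
rewrite (exchange_big_dep xpredT) //=; apply: eq_bigr => i _.
rewrite -cards_draws -sumr_const mulr_suml mul1r.
by apply: eq_bigl => B; rewrite inE.
Qed.

Lemma binom_subsets (T : finType) (A : {set T}) (x y : R) :
  \sum_(B : {set T} | B \subset A) x ^+ #|B| * y ^+ (#|A| - #|B|) = (x + y) ^+ #|A|.
Proof.
rewrite (sum_subsets_card A (fun i => x ^+ i * y ^+ (#|A| - i))).
rewrite addrC exprDn; apply: eq_bigr => i _.
by rewrite mulr_natl mulrC.
Qed.

Lemma Ex_sup (D : {set {set 'I_n}}) : D \subset edges n ->
  Ex (fun S => (D \subset S)%:R) = p ^+ #|D|.
Proof.
move=> sDE; rewrite /Ex.
rewrite (eq_bigr (fun S : {set {set 'I_n}} => if D \subset S then wgt S else 0)); last first.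
  by move=> S _; case: (D \subset S); rewrite ?mulr1 ?mulr0.
rewrite -big_mkcondr /=.
rewrite (reindex_onto (fun T : {set {set 'I_n}} => D :|: T) (fun S : {set {set 'I_n}} => S :\: D)) /=; last first.
  by move=> S /andP[_ sDS]; rewrite setDE setUIr setUCr setIT; apply/setUidPr.
rewrite (eq_bigl (fun T : {set {set 'I_n}} => T \subset edges n :\: D)); last first.
  move=> T; rewrite subsetD subsetUl andbT subUset sDE /=.
  rewrite setDUl setDv set0U.
  by rewrite (sameP eqP setDidPl).
rewrite (eq_bigr (fun T : {set {set 'I_n}} => p ^+ #|D| *
   (p ^+ #|T| * (1 - p) ^+ (#|edges n :\: D| - #|T|)))); last first.
  move=> T; rewrite subsetD => /andP[sTE dTD].
  rewrite /wgt cardsU (disjoint_setI0 _) ?cards0 ?subn0; last by rewrite disjoint_sym.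
  by rewrite cardsD (setIidPr sDE) subnDA exprD mulrA.
by rewrite -mulr_sumr binom_subsets addrC subrK expr1n mulr1.
Qed.

Hypothesis p0 : 0 <= p.
Hypothesis p1 : p <= 1.

Lemma wgt_ge0 (S : {set {set 'I_n}}) : 0 <= wgt S.
Proof. by rewrite /wgt mulr_ge0 // exprn_ge0 // subr_ge0. Qed.

Lemma Ex_le (f g : {set {set 'I_n}} -> R) :
  (forall S : {set {set 'I_n}}, S \subset edges n -> f S <= g S) -> Ex f <= Ex g.
Proof.
move=> h; apply: ler_sum => S sS; apply: ler_wpM2l; [exact: wgt_ge0 | exact: h].
Qed.

Lemma Ex_sum (I : finType) (P : pred I) (g : I -> {set {set 'I_n}} -> R) :
  Ex (fun S => \sum_(i | P i) g i S) = \sum_(i | P i) Ex (g i).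
Proof.
rewrite /Ex (eq_bigr (fun S => \sum_(i | P i) wgt S * g i S)); last first.
  by move=> S _; rewrite mulr_sumr.
by rewrite exchange_big.
Qed.

Lemma Ex_lin (a b : R) (f g : {set {set 'I_n}} -> R) :
  Ex (fun S => a * f S - b * g S) = a * Ex f - b * Ex g.
Proof.
rewrite /Ex (eq_bigr (fun S => a * (wgt S * f S) - b * (wgt S * g S))); last first.
  by move=> S _; ring.
by rewrite big_split /= sumrN !mulr_sumr.
Qed.
End Prob.

Local Open Scope ring_scope.

Lemma ffact_leq_exp (a i : nat) : (a ^_ i <= a ^ i)%N.
Proof.
elim: i => [|i IH]; first by rewrite ffactn0.
by rewrite ffactnSr expnSr leq_mul // leq_subr.
Qed.

Lemma bin_fact_le (a i : nat) : ('C(a, i) * i`! <= a ^ i)%N.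
Proof. by rewrite bin_ffact ffact_leq_exp. Qed.

Lemma exp2_fact (j : nat) : (2 ^ j <= 2 * j`!)%N.
Proof.
elim: j => [|j IH] //; rewrite expnS factS.
case: j IH => [|j] IH //.
rewrite mulnCA; apply: leq_mul => //.
Qed.

Lemma term_le (i j : nat) : (j <= i)%N ->
  ('C(i, j) * i ^ (i - j) * 2 ^ j <= 2 * i ^ i)%N.
Proof.
move=> ji.
have h1 : ('C(i, j) * 2 ^ j <= 2 * i ^ j)%N.
  apply: (leq_trans (leq_mul (leqnn _) (exp2_fact j))).
  by rewrite mulnCA leq_mul2l bin_fact_le orbT.
rewrite mulnAC; apply: (leq_trans (leq_mul h1 (leqnn (i ^ (i - j))))).
by rewrite -mulnA -expnD subnKC.
Qed.

Section R.
Variable R : realType.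

Lemma geom_le (q : R) (B : nat) : 0 <= q -> 2 * q <= 1 ->
  \sum_(j < B) q ^+ j <= 2 - 2 * q ^+ B.
Proof.
move=> q0 q1; elim: B => [|B IH]; first by rewrite big_ord0 expr0; lra.
rewrite big_ord_recr /= exprS.
have hq : 0 <= q ^+ B by rewrite exprn_ge0.
have : 2 * q * q ^+ B <= q ^+ B by rewrite -[X in _ <= X]mul1r ler_wpM2r.
nra.
Qed.

Lemma succ_pow_le (i : nat) : (i%:R + 1) ^+ i <= 4 * (i%:R : R) ^+ i.
Proof.
rewrite exprDn.
have -> : 4 * (i%:R : R) ^+ i = 2 * i%:R ^+ i * 2.
  by ring.
apply: (le_trans (y := \sum_(j < i.+1) 2 * i%:R ^+ i * (2^-1) ^+ j)).
  apply: ler_sum => j _; rewrite expr1n mulr1.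
  have hj : (j <= i)%N by rewrite -ltnS.
  have := term_le hj; rewrite -(ler_nat R) !natrM !natrX => h.
  rewrite -mulr_natr exprVn ler_pdivlMr ?exprn_gt0 //.
  by rewrite (mulrC (i%:R ^+ (i - j))).

rewrite -mulr_sumr; apply: ler_wpM2l; first by rewrite mulr_ge0 // exprn_ge0.
have := @geom_le (2^-1) i.+1; rewrite invr_ge0 ler0n; move/(_ isT).
have -> : 2 * (2^-1 : R) = 1 by rewrite mulfV // pnatr_eq0.
move/(_ (lexx _)) => h; apply: (le_trans h).
by rewrite lerBlDr lerDl mulr_ge0 // exprn_ge0 // invr_ge0.
Qed.

Lemma pow_fact (i : nat) : (i%:R : R) ^+ i <= 4 ^+ i * i`!%:R.
Proof.
elim: i => [|i IH]; first by rewrite !expr0 mul1r.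
rewrite -natr1 exprS factS natrM.
have h := succ_pow_le i.
have hi : 0 <= (i%:R : R) + 1 by rewrite addr_ge0.
have : ((i%:R : R) + 1) * (i%:R + 1) ^+ i <= (i%:R + 1) * (4 * i%:R ^+ i) by apply: ler_wpM2l.
move=> h2; apply: (le_trans h2).
have e : (i.+1%:R : R) = i%:R + 1 by rewrite -natr1.
rewrite e exprS.
have h4 : 0 <= (4 : R) ^+ i by rewrite exprn_ge0.
have hf : 0 <= (i`!%:R : R) by rewrite ler0n.
nra.
Qed.

End R.

Section R2.
Variable R : realType.

Lemma bin_le_R (a i : nat) : ('C(a, i)%:R : R) * i`!%:R <= a%:R ^+ i.
Proof. by rewrite -natrM -natrX ler_nat bin_fact_le. Qed.

Lemma binbin_le (a b i : nat) : (b <= 4 * (i * i))%N ->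
  ('C(a, i)%:R : R) * 'C(b, i)%:R <= (64 * a%:R) ^+ i.
Proof.
move=> hb.
set F : R := i`!%:R.
have F0 : 0 < F by rewrite ltr0n fact_gt0.
have h1 := bin_le_R a i; have h2 := bin_le_R b i.
have h3 : (b%:R : R) ^+ i <= 4 ^+ i * ((i%:R) ^+ i) ^+ 2.
  have -> : (4 : R) ^+ i * ((i%:R) ^+ i) ^+ 2 = (4 * (i%:R * i%:R)) ^+ i.
    by rewrite !exprMn expr2.
  apply: lerXn2r; rewrite ?nnegrE ?ler0n ?mulr_ge0 ?ler0n //.
  by rewrite -!natrM ler_nat.
have h4 := pow_fact R i.
have h5 : ((i%:R : R) ^+ i) ^+ 2 <= (4 ^+ i * F) ^+ 2.
  apply: lerXn2r; last exact: h4.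
    by rewrite nnegrE exprn_ge0 // ler0n.
  by rewrite nnegrE mulr_ge0 ?exprn_ge0 // ltW.
have hC1 : 0 <= ('C(a, i)%:R : R) by rewrite ler0n.
have hC2 : 0 <= ('C(b, i)%:R : R) by rewrite ler0n.
have key : ('C(a, i)%:R : R) * 'C(b, i)%:R * (F * F) <=
           (a%:R ^+ i) * (4 ^+ i * (4 ^+ i * F) ^+ 2).
  have -> : ('C(a, i)%:R : R) * 'C(b, i)%:R * (F * F) =
            ('C(a, i)%:R * F) * ('C(b, i)%:R * F) by ring.
  apply: ler_pM => //; first by rewrite mulr_ge0.
  by rewrite mulr_ge0.
  apply: (le_trans h2); apply: (le_trans h3); rewrite ler_wpM2l //.
  by rewrite exprn_ge0.
have -> : (64 * (a%:R : R)) ^+ i = (a%:R ^+ i) * (4 ^+ i * (4 ^+ i * 4 ^+ i)).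
  have -> : (64 : R) = 4 * (4 * 4) by ring.
  by rewrite !exprMn mulrC.
have FF : 0 < F * F by rewrite mulr_gt0.
rewrite -(ler_pM2r FF); apply: (le_trans key); rewrite le_eqVlt; apply/orP; left.
apply/eqP; ring.
Qed.

Lemma term_bound (k n a b i : nat) (lam : R) : (0 < n)%N -> 0 <= lam ->
  (a <= k * n)%N -> (b <= 4 * (i * i))%N ->
  ('C(a, i)%:R : R) * 'C(b, i)%:R * (lam / n%:R) ^+ i <= (64 * k%:R * lam) ^+ i.
Proof.
move=> n0 l0 ha hb.
have := binbin_le a hb => h.
have h' : (64 * (a%:R : R)) ^+ i <= (64 * (k * n)%:R) ^+ i.
  apply: lerXn2r; rewrite ?nnegrE ?mulr_ge0 ?ler0n //.
  by rewrite ler_wpM2l // ler_nat.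
have hp : 0 <= (lam / n%:R) ^+ i by rewrite exprn_ge0 // divr_ge0.
apply: (le_trans (ler_wpM2r hp (le_trans h h'))).
rewrite -exprMn.
rewrite le_eqVlt; apply/orP; left; apply/eqP; congr (_ ^+ _).
have nn : (n%:R : R) != 0 by rewrite pnatr_eq0 -lt0n.
rewrite natrM; field.
exact: nn.
Qed.
End R2.

Local Close Scope ring_scope.

Section Graph.
Variable n : nat.
Implicit Types (H Hs M D : {set {set 'I_n}}) (v : 'I_n).

Definition inc H v := [set e in H | v \in e].

Lemma card_incE H v : #|inc H v| = \sum_(e in H) (v \in e).
Proof.
rewrite -sum1_card (eq_bigl (fun e => (e \in H) && (v \in e))); last first.
  by move=> e; rewrite inE.
by rewrite big_mkcondr /=; apply: eq_bigr => e _; case: (v \in e).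
Qed.

Lemma handshake H : H \subset edges n -> \sum_v #|inc H v| = 2 * #|H|.
Proof.
move=> sHE.
rewrite (eq_bigr _ (fun v _ => card_incE H v)) exchange_big /=.
rewrite (eq_bigr (fun _ => 2)); last first.
  move=> e eH; have := subsetP sHE e eH; rewrite inE => /eqP <-.
  by rewrite -sum1_card [RHS]big_mkcond /=; apply: eq_bigr => v _; case: (v \in e).
by rewrite sum_nat_const mulnC.
Qed.

Lemma kf_card k H Hs : is_kfactor k H -> is_kfactor k Hs -> #|H| = #|Hs|.
Proof.
move=> /andP[sHE /forallP dH] /andP[sSE /forallP dS].
apply/eqP; rewrite -(eqn_pmul2l (isT : (0 < 2)%N)) -!handshake //.
rewrite (eq_bigr (fun _ => k)); last by move=> v _; apply/eqP; exact: dH.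
by rewrite [X in _ == X](eq_bigr (fun _ => k)) // => v _; apply/eqP; exact: dS.
Qed.

Lemma witness k Hs H : is_kfactor k Hs -> is_kfactor k H -> H != Hs ->
  [/\ Hs :\: H \subset Hs,
      H :\: Hs \subset [set e in edges n | e \subset cover (Hs :\: H)],
      #|H :\: Hs| = #|Hs :\: H| & (0 < #|Hs :\: H|)%N].
Proof.
move=> kS kH neq.
have cHS := kf_card kH kS.
have cD : #|H :\: Hs| = #|Hs :\: H| by rewrite !cardsD setIC cHS.
move: (kS) (kH) => /andP[sSE /forallP dS] /andP[sHE /forallP dH].
split => //.
- exact: subsetDl.
- apply/subsetP => e; rewrite inE => /setDP[eH eNS].
  rewrite (subsetP sHE e eH) /=.
  apply/subsetP => v ve; apply/bigcupP.
  case: (boolP [exists e' in Hs :\: H, v \in e']) => [/exists_inP[e' h1 h2]|hno].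
    by exists e'.
  exfalso.
  have sub : inc Hs v \subset inc H v.
    apply/subsetP => e'; rewrite !inE => /andP[e'S ve'].
    rewrite ve' andbT; apply/negPn/negP => e'H; apply: (negP hno).
    by apply/exists_inP; exists e' => //; rewrite inE e'H e'S.
  have : inc Hs v == inc H v.
    by rewrite eqEcard sub /= /inc (eqP (dH v)) (eqP (dS v)).
  move/eqP => eqi.
  have : e \in inc H v by rewrite inE eH ve.
  by rewrite -eqi inE (negbTE eNS).
- rewrite lt0n; apply/negP => /eqP c0.
  move: neq; rewrite eqEcard cHS leqnn andbT -setD_eq0 -cards_eq0 cD c0 eqxx.
  by [].
Qed.
End Graph.

Local Open Scope ring_scope.

Definition Pairs n (M : {set {set 'I_n}}) : {set {set 'I_n}} :=
  [set e in edges n | e \subset cover M].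

Lemma card_Pairs n (M : {set {set 'I_n}}) : M \subset edges n ->
  (#|Pairs M| <= 4 * (#|M| * #|M|))%N.
Proof.
move=> sME.
have e1 : #|Pairs M| = 'C(#|cover M|, 2).
  by rewrite -cards_draws; apply: eq_card => e; rewrite !inE andbC.
have c1 : (#|cover M| <= 2 * #|M|)%N.
  apply: leq_trans (leq_of_leqif (leq_card_cover M)) _.
  rewrite (eq_bigr (fun _ => 2%N)); last first.
    by move=> e eM; have := subsetP sME e eM; rewrite inE => /eqP.
  by rewrite sum_nat_const mulnC.
rewrite e1; apply: (leq_trans (leq_bin2l 2 c1)).
have := bin_fact_le (2 * #|M|) 2; rewrite /= => h.
apply: leq_trans (leq_trans _ h) _; first by rewrite leq_pmulr.
by rewrite expnMn mulnn.
Qed.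

Lemma kf_size n k (Hs : {set {set 'I_n}}) : is_kfactor k Hs -> (#|Hs| <= k * n)%N.
Proof.
move=> /andP[sSE /forallP dS].
have h := handshake sSE.
rewrite (eq_bigr (fun _ => k)) in h; last by move=> v _; apply/eqP; exact: dS.
rewrite sum_nat_const card_ord in h.
have : (2 * #|Hs| <= 2 * (k * n))%N by rewrite -h mulnC leq_pmull.
by rewrite leq_pmul2l.
Qed.

Lemma fin_aux (R : realType) (q X S : R) : 0 <= q -> 0 <= X -> S <= 2 - 2 * X ->
  q * S <= 2 * q.
Proof. move=> *; nra. Qed.

Lemma part1_bound (R : realType) (n k : nat) (lam : R) (Hs : {set {set 'I_n}}) :
  (0 < n)%N -> 0 <= lam -> lam <= n%:R -> is_kfactor k Hs ->
  2 * (64 * k%:R * lam) <= 1 ->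
  gnp_prob (lam / n%:R) (other_kfactor k Hs) <= 2 * (64 * k%:R * lam).
Proof.
move=> n0 l0 ln kS hq.
set p := lam / n%:R.
have p0 : 0 <= p by rewrite divr_ge0.
have p1 : p <= 1 by rewrite ler_pdivrMr ?ltr0n // mul1r.
rewrite gnpE.
apply: (le_trans (y := Ex p
  (fun S => \sum_(w : {set {set 'I_n}} * {set {set 'I_n}} |
    (w.1 \subset Hs) && (0 < #|w.1|)%N && ((w.2 \subset Pairs w.1) && (#|w.2| == #|w.1|)))
    ((w.2 \subset S)%:R)))).
  apply: (Ex_le p0 p1) => S sSE.
  case: (boolP (other_kfactor k Hs S)) => [/existsP[H /and3P[kH nHS sHS]]|_]; last first.
    by rewrite sumr_ge0 // => w _; rewrite ler0n.
  have [w1 w2 w3 w4] := witness kS kH nHS.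
  rewrite (bigD1 (Hs :\: H, H :\: Hs)) /=; last by rewrite w1 w4 w2 w3 eqxx.
  have -> : (H :\: Hs \subset S).
    apply/subsetP => e /setDP[eH eNS]; move: (subsetP sHS e eH).
    by rewrite inE (negbTE eNS) orbF.
  by rewrite lerDl sumr_ge0 // => w _; rewrite ler0n.
rewrite Ex_sum.
rewrite (eq_bigr (fun w : {set {set 'I_n}} * {set {set 'I_n}} => p ^+ #|w.1|)); last first.
  move=> w /and3P[/andP[s1 _] s2 /eqP c2].
  rewrite Ex_sup; first by rewrite c2.
  apply: subset_trans s2 _; apply/subsetP => e; rewrite inE => /andP[] //.
rewrite -(pair_big_dep (fun M : {set {set 'I_n}} => (M \subset Hs) && (0 < #|M|)%N)
  (fun M D : {set {set 'I_n}} => (D \subset Pairs M) && (#|D| == #|M|))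
  (fun M D : {set {set 'I_n}} => p ^+ #|M|)) /=.
have sSE : Hs \subset edges n by case/andP: kS.
apply: (le_trans (y := \sum_(M : {set {set 'I_n}} | (M \subset Hs) && (0 < #|M|)%N)
   ('C(4 * (#|M| * #|M|), #|M|)%:R * p ^+ #|M|))).
  apply: ler_sum => M /andP[sMS _].
  rewrite (eq_bigl (fun D : {set {set 'I_n}} => D \in [set D : {set {set 'I_n}} | D \subset Pairs M & #|D| == #|M|])); last first.
    by move=> D; rewrite inE.
  rewrite sumr_const cards_draws -[X in X <= _]mulr_natr [X in X <= _]mulrC.
  apply: ler_wpM2r; first exact: exprn_ge0.
  by rewrite ler_nat leq_bin2l // card_Pairs // (subset_trans sMS sSE).
rewrite big_mkcondr /=.
rewrite (sum_subsets_card Hs (fun i => if (0 < i)%N then 'C(4 * (i * i), i)%:R * p ^+ i else 0)).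
apply: (le_trans (y := \sum_(i < #|Hs|.+1) (if (0 < i)%N then (64 * k%:R * lam) ^+ i else 0))).
  apply: ler_sum => i _; case: ifP => hi; last by rewrite mulr0.
  rewrite mulrA; apply: term_bound => //; exact: kf_size.
rewrite big_ord_recl /= add0r.
rewrite (eq_bigr (fun i : 'I_#|Hs| => (64 * k%:R * lam) * (64 * k%:R * lam) ^+ i)); last first.
  by move=> i _; rewrite /= exprS.
rewrite -mulr_sumr.
have q0 : 0 <= 64 * k%:R * lam by rewrite mulr_ge0 // mulr_ge0.
have := geom_le #|Hs| q0 hq => h.
have hB : 0 <= (64 * k%:R * lam) ^+ #|Hs| by rewrite exprn_ge0.
exact: fin_aux q0 hB h.
Qed.

Local Close Scope ring_scope.

Lemma card_bigcup_le (T I : finType) (P : pred I) (F : I -> {set T}) :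
  (#|\bigcup_(i | P i) F i| <= \sum_(i | P i) #|F i|)%N.
Proof.
elim/big_rec2: _ => [|i A s _ h]; first by rewrite cards0.
apply: leq_trans (leq_of_leqif (leq_card_setU _ _)) _.
by rewrite leq_add2l.
Qed.

Lemma card_incE' (T : finType) (H : {set {set T}}) (v : T) :
  #|[set e in H | v \in e]| = (\sum_(e in H) (v \in e))%N.
Proof.
rewrite -sum1_card (eq_bigl (fun e => (e \in H) && (v \in e))); last first.
  by move=> e; rewrite inE.
by rewrite big_mkcondr /=; apply: eq_bigr => e _; case: (v \in e).
Qed.

Lemma card_inc2 (T : finType) (x y : {set T}) (v : T) : x != y ->
  #|[set e in [set x; y] | v \in e]| = ((v \in x) + (v \in y))%N.
Proof.
move=> nxy; rewrite card_incE' big_setU1 /=; last by rewrite inE.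
by rewrite big_set1.
Qed.

Lemma swap_deg n (Hs Rm D : {set {set 'I_n}}) (v : 'I_n) :
  Rm \subset Hs -> [disjoint D & Hs] -> #|inc Rm v| = #|inc D v| ->
  #|inc ((Hs :\: Rm) :|: D) v| = #|inc Hs v|.
Proof.
move=> sRH dDH hc.
have -> : inc ((Hs :\: Rm) :|: D) v = (inc Hs v :\: inc Rm v) :|: inc D v.
  apply/setP => e; rewrite !inE.
  by case: (e \in Hs); case: (e \in Rm); case: (e \in D); case: (v \in e).
have sI : inc Rm v \subset inc Hs v.
  by apply/subsetP => e; rewrite !inE => /andP[/(subsetP sRH) -> ->].
rewrite cardsU.
have -> : (inc Hs v :\: inc Rm v) :&: inc D v = set0.
  apply/setP => e; rewrite !inE.
  case eD: (e \in D); case eH: (e \in Hs); rewrite ?andbF ?andFb //=.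
  by rewrite (disjointFr dDH eD) in eH.
rewrite cards0 subn0 cardsD (setIidPr sI) -hc subnK //.
exact: subset_leq_card.
Qed.

Lemma orb_nat (x y : bool) : ~~ (x && y) -> nat_of_bool (x || y) = (x + y)%N.
Proof. by case: x; case: y. Qed.

Lemma excl (T : eqType) (v a b : T) : a != b -> ~~ ((v == a) && (v == b)).
Proof. by move=> ab; apply/andP => [[/eqP -> /eqP h]]; rewrite h eqxx in ab. Qed.

Lemma four (T : eqType) (v a b c d : T) : a != b -> c != d -> a != c -> b != d ->
  (((v == a) || (v == b)) + ((v == c) || (v == d)))%N =
  (((v == a) || (v == c)) + ((v == b) || (v == d)))%N.
Proof.
move=> ab cd ac bd.
rewrite !orb_nat ?excl //; exact: addnACA.
Qed.

Section Swap.
Variables (n k : nat) (Hs : {set {set 'I_n}}).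
Hypothesis kS : is_kfactor k Hs.
Variable f : 'I_n -> 'I_n.
Hypothesis hf : forall a, [set a; f a] \in Hs.

Lemma sSE : Hs \subset edges n. Proof. by case/andP: kS. Qed.

Lemma edge_neq (u v : 'I_n) : [set u; v] \in Hs -> u != v.
Proof.
move=> h; have := subsetP sSE _ h; rewrite inE cards2.
by case: (u != v).
Qed.

Lemma fneq a : a != f a. Proof. exact: edge_neq (hf a). Qed.

Definition Nbr (v : 'I_n) := [set u | [set u; v] \in Hs].

Lemma card_Nbr v : (#|Nbr v| <= k)%N.
Proof.
move: kS => /andP[_ /forallP dS].
rewrite -(eqP (dS v)).
have inj : {in Nbr v &, injective (fun u => [set u; v])}.
  move=> u u'; rewrite !inE => hu hu' e.
  have : u \in [set u'; v] by rewrite -e !inE eqxx.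
  rewrite !inE => /orP[/eqP //|/eqP uv].
  by move: (edge_neq hu); rewrite uv eqxx.
rewrite -(card_in_imset inj); apply: subset_leq_card.
apply/subsetP => e /imsetP[u]; rewrite inE => hu ->.
by rewrite inE hu !inE eqxx orbT.
Qed.

Lemma card_preim (X : {set 'I_n}) : (#|f @^-1: X| <= k * #|X|)%N.
Proof.
have sub : f @^-1: X \subset \bigcup_(u in X) Nbr u.
  apply/subsetP => c; rewrite inE => cX; apply/bigcupP; exists (f c) => //.
  by rewrite inE.
apply: leq_trans (subset_leq_card sub) _.
apply: leq_trans (card_bigcup_le _ _) _.
rewrite mulnC -sum_nat_const; apply: leq_sum => u _; exact: card_Nbr.
Qed.


Definition valid (ij : 'I_n * 'I_n) :=
  [&& ij.1 != ij.2, ij.1 != f ij.2, ij.2 != f ij.1, f ij.1 != f ij.2,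
      [set ij.1; ij.2] \notin Hs & [set f ij.1; f ij.2] \notin Hs].

Definition Dp (ij : 'I_n * 'I_n) : {set {set 'I_n}} :=
  [set [set ij.1; ij.2]; [set f ij.1; f ij.2]].

Definition Hsw (ij : 'I_n * 'I_n) :=
  (Hs :\: [set [set ij.1; f ij.1]; [set ij.2; f ij.2]]) :|: Dp ij.

Lemma Dp_edges ij : valid ij -> Dp ij \subset edges n.
Proof.
case: ij => a c; rewrite /valid /= => /and3P[ac afc /and4P[cfa ff nac nff]].
by apply/subsetP => e; rewrite !inE => /orP[/eqP->|/eqP->]; rewrite cards2 ?ac ?ff.
Qed.

Lemma Dp_neq a c : a != f c -> [set a; c] != [set f a; f c].
Proof.
move=> afc; apply/eqP => h.
have : a \in [set f a; f c] by rewrite -h !inE eqxx.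
by rewrite !inE (negbTE (fneq a)) (negbTE afc).
Qed.

Lemma card_Dp ij : valid ij -> #|Dp ij| = 2%N.
Proof.
case: ij => a c; rewrite /valid /= => /and3P[ac afc /and4P[cfa ff nac nff]].
by rewrite /Dp cards2 Dp_neq.
Qed.

Lemma valid_other ij (S : {set {set 'I_n}}) : valid ij -> Dp ij \subset S ->
  other_kfactor k Hs S.
Proof.
move=> vij sDS; have DE := Dp_edges vij.
move: vij; case: ij sDS DE => a c sDS DE; rewrite /valid /= => /and3P[ac afc /and4P[cfa ff nac nff]].
apply/existsP; exists (Hsw (a, c)); apply/and3P; split.
- apply/andP; split.
    by rewrite subUset DE andbT (subset_trans (subsetDl _ _) sSE).
  move: kS => /andP[_ /forallP dS].
  apply/forallP => v.
  have e12 : [set a; f a] != [set c; f c].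
    apply/eqP => h; have : a \in [set c; f c] by rewrite -h !inE eqxx.
    by rewrite !inE (negbTE ac) (negbTE afc).
  have := @swap_deg n Hs [set [set a; f a]; [set c; f c]] (Dp (a, c)) v.
  rewrite /inc => -> //.
  + by apply/subsetP => e; rewrite !inE => /orP[/eqP->|/eqP->]; exact: hf.
  + rewrite disjoints_subset; apply/subsetP => e.
    by rewrite !inE => /orP[/eqP->|/eqP->].
  + rewrite card_inc2 // card_inc2 ?Dp_neq // !inE.
    exact: four (fneq a) (fneq c) ac ff.
- apply/eqP => h.
  have : [set a; c] \in Hsw (a, c) by rewrite in_setU /Dp !inE eqxx orbT.
  by rewrite h (negbTE nac).
- apply/subsetP => e; rewrite /Hsw => /setUP[/setDP[eHs _]|eD].
    by rewrite in_setU eHs orbT.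
  by rewrite in_setU (subsetP sDS e eD).
Qed.


Definition Kb := (2 + k + (k + k * k))%N.

Lemma bad_sub a : [set c | ~~ valid (a, c)] \subset
  ([set a; f a] :|: Nbr a) :|: (Nbr (f a) :|: f @^-1: Nbr (f a)).
Proof.
apply/subsetP => c; rewrite !inE; apply: contraR.
move=> /norP[/norP[/norP[ca cfa] cNa] /norP[cNfa cpre]].
rewrite /valid /=; apply/and3P; split; first by rewrite eq_sym.
  by apply: contraNneq cNa => ->; exact: hf.
apply/and4P; split => //.
- by apply: contraNneq cNfa => ->; exact: hf.
- by rewrite setUC.
- by rewrite setUC.
Qed.

Lemma card_row a : (n - Kb <= #|[set c | valid (a, c)]|)%N.
Proof.
have e : #|[set c | valid (a, c)]| = (n - #|[set c | ~~ valid (a, c)]|)%N.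
  rewrite (cardsCs [set c | valid (a, c)]) card_ord; congr (_ - _)%N.
  by apply: eq_card => c; rewrite !inE.
rewrite e; apply: leq_sub2l.
apply: leq_trans (subset_leq_card (bad_sub a)) _.
apply: leq_trans (leq_of_leqif (leq_card_setU _ _)) _.
rewrite /Kb; apply: leq_add.
  apply: leq_trans (leq_of_leqif (leq_card_setU _ _)) _.
  apply: leq_add; last exact: card_Nbr.
  by rewrite cards2; case: (a != f a).
apply: leq_trans (leq_of_leqif (leq_card_setU _ _)) _.
apply: leq_add; first exact: card_Nbr.
apply: leq_trans (card_preim _) _; rewrite leq_mul2l card_Nbr orbT //.
Qed.

Lemma card_valid : (n * (n - Kb) <= #|[set ij | valid ij]|)%N.
Proof.
have e : #|[set ij | valid ij]| = \sum_(a : 'I_n) #|[set c | valid (a, c)]|.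
  rewrite -sum1_card (eq_bigl (fun ij : 'I_n * 'I_n => xpredT ij.1 && valid (ij.1, ij.2))); last first.
    by case=> a c; rewrite inE.
  rewrite -(pair_big_dep xpredT (fun a c => valid (a, c)) (fun _ _ => 1%N)) /=.
  apply: eq_bigr => a _; rewrite -sum1_card; apply: eq_bigl => c; by rewrite inE.
rewrite e -[X in (X * _)%N]card_ord -sum_nat_const; apply: leq_sum => a _.
exact: card_row.
Qed.

Definition Vs (ij : 'I_n * 'I_n) := [set ij.1; ij.2] :|: [set f ij.1; f ij.2].
Definition Ys ij := Vs ij :|: f @^-1: Vs ij.

Lemma card_Ys ij : (#|Ys ij| <= 4 + 4 * k)%N.
Proof.
have hV : (#|Vs ij| <= 4)%N.
  apply: leq_trans (leq_of_leqif (leq_card_setU _ _)) _.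
  by rewrite !cards2; case: (ij.1 != ij.2); case: (f ij.1 != f ij.2).
apply: leq_trans (leq_of_leqif (leq_card_setU _ _)) _.
apply: leq_add => //; apply: leq_trans (card_preim _) _.
by rewrite mulnC leq_mul2r hV orbT.
Qed.

Lemma overlap_sub i j : ~~ [disjoint Dp i & Dp j] -> (j.1 \in Ys i) && (j.2 \in Ys i).
Proof.
rewrite -setI_eq0 => /set0Pn[e /setIP[ei ej]].
have sV : e \subset Vs i.
  have ei' : (e == [set i.1; i.2]) || (e == [set f i.1; f i.2]) by move: ei; rewrite /Dp !inE.
  case/orP: ei' => /eqP->.
    exact: subsetUl.
  exact: subsetUr.
have ej' : (e == [set j.1; j.2]) || (e == [set f j.1; f j.2]) by move: ej; rewrite /Dp !inE.
case/orP: ej' => /eqP eE.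
  have h1 : j.1 \in Vs i by apply: (subsetP sV); rewrite eE !inE eqxx.
  have h2 : j.2 \in Vs i by apply: (subsetP sV); rewrite eE !inE eqxx orbT.
  by rewrite /Ys in_setU h1 in_setU h2.
have h1 : f j.1 \in Vs i by apply: (subsetP sV); rewrite eE !inE eqxx.
have h2 : f j.2 \in Vs i by apply: (subsetP sV); rewrite eE !inE eqxx orbT.
by apply/andP; split; apply/setUP; right; rewrite in_set.
Qed.

Definition Jov i := [set j | valid j && ~~ [disjoint Dp i & Dp j]].

Lemma card_Jov i : (#|Jov i| <= (4 + 4 * k) * (4 + 4 * k))%N.
Proof.
have sub : Jov i \subset setX (Ys i) (Ys i).
  apply/subsetP => j; rewrite inE => /andP[_ /overlap_sub /andP[h1 h2]].
  by rewrite inE h1 h2.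
apply: leq_trans (subset_leq_card sub) _.
by rewrite cardsX leq_mul // card_Ys.
Qed.

End Swap.

Local Open Scope ring_scope.

Lemma quad_le (R : realType) (s t : R) : s * t - (s ^+ 2 / 2) * t ^+ 2 <= 1.
Proof.
have -> : s * t - (s ^+ 2 / 2) * t ^+ 2 = 1/2 - (s * t - 1) ^+ 2 / 2 + 1/2 - 1/2 + 0.
  by field.
have : 0 <= (s * t - 1) ^+ 2 by rewrite sqr_ge0.
lra.
Qed.

Lemma alg_id (R : realType) (x C : R) : x + C != 0 ->
  x / (2 * (x + C)) = (x + C)^-1 * x - ((x + C)^-1) ^+ 2 / 2 * (x ^+ 2 + C * x).
Proof. by move=> h; field. Qed.

Section Part2.
Variables (R : realType) (n k : nat) (Hs : {set {set 'I_n}}).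
Hypothesis kS : is_kfactor k Hs.
Variable f : 'I_n -> 'I_n.
Hypothesis hf : forall a, [set a; f a] \in Hs.
Variable p : R.
Hypothesis p0 : 0 <= p.
Hypothesis p1 : p <= 1.

Let I := [set ij | valid Hs f ij].
Let Dp := Dp f.

Definition tt (S : {set {set 'I_n}}) : R := \sum_(i in I) (Dp i \subset S)%:R.

Lemma pointwise (s : R) (S : {set {set 'I_n}}) : S \subset edges n ->
  s * tt S - (s ^+ 2 / 2) * tt S ^+ 2 <= (other_kfactor k Hs S)%:R.
Proof.
move=> sSE.
case: (boolP (other_kfactor k Hs S)) => ho; first exact: quad_le.
have -> : tt S = 0.
  rewrite /tt big1 // => i; rewrite inE => vi.
  case: (boolP (Dp i \subset S)) => // hD.
  by move: ho; rewrite (valid_other kS hf vi hD).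
by rewrite mulr0 expr0n mulr0 subrr.
Qed.

Lemma Ex_tt : Ex p tt = #|I|%:R * p ^+ 2.
Proof.
rewrite /tt Ex_sum (eq_bigr (fun _ => p ^+ 2)); last first.
  move=> i; rewrite inE => vi; rewrite Ex_sup; first by rewrite (card_Dp kS hf vi).
  exact (Dp_edges vi).
by rewrite sumr_const mulr_natl.
Qed.

Lemma tt2 (S : {set {set 'I_n}}) : tt S ^+ 2 = \sum_(i in I) \sum_(j in I) (Dp i :|: Dp j \subset S)%:R.
Proof.
rewrite expr2 /tt mulr_suml; apply: eq_bigr => i _.
rewrite mulr_sumr; apply: eq_bigr => j _.
by rewrite subUset; case: (Dp i \subset S); case: (Dp j \subset S); rewrite ?mulr1 ?mulr0.
Qed.


Lemma Ex_ext (g h : {set {set 'I_n}} -> R) : (forall S, g S = h S) -> Ex p g = Ex p h.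
Proof. by move=> e; apply: eq_bigr => S _; rewrite e. Qed.

Definition Cc : R := ((4 + 4 * k) * (4 + 4 * k))%:R.

Lemma sum_ind_le (T : finType) (A B : {set T}) :
  \sum_(j in A) ((j \in B)%:R : R) <= #|B|%:R.
Proof.
apply: (le_trans (y := \sum_j ((j \in B)%:R : R))).
  by rewrite [X in _ <= X](bigID (fun j => j \in A)) /= lerDl sumr_ge0.
rewrite -sum1_card natr_sum [X in _ <= X]big_mkcond /=.
by apply: ler_sum => j _; case: (j \in B).
Qed.

Lemma Ex_tt2_le : Ex p (fun S => tt S ^+ 2) <=
  #|I|%:R * (#|I|%:R * p ^+ 4 + Cc * p ^+ 2).
Proof.
rewrite (Ex_ext (h := fun S => \sum_(i in I) \sum_(j in I) (Dp i :|: Dp j \subset S)%:R));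
  last by move=> S; rewrite tt2.
rewrite Ex_sum.
rewrite [X in _ <= X]mulr_natl -(sumr_const (mem I)).
apply: ler_sum => i; rewrite inE => vi.
rewrite Ex_sum.
rewrite (eq_bigr (fun j => p ^+ #|Dp i :|: Dp j|)); last first.
  move=> j; rewrite inE => vj; rewrite Ex_sup //.
  by rewrite subUset (Dp_edges vi) (Dp_edges vj).
apply: (le_trans (y := \sum_(j in I) (p ^+ 4 + (j \in Jov Hs f i)%:R * p ^+ 2))).
  apply: ler_sum => j; rewrite inE => vj.
  have c2i := card_Dp kS hf vi; have c2j := card_Dp kS hf vj.
  case: (boolP [disjoint Dp i & Dp j]) => hd.
    rewrite cardsU (disjoint_setI0 hd) cards0 subn0 /Dp c2i c2j lerDl.
    by rewrite mulr_ge0 ?ler0n // exprn_ge0.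
  have -> : (j \in Jov Hs f i) = true by rewrite inE vj hd.
  rewrite mul1r; apply: (le_trans (y := p ^+ 2)); last by rewrite lerDr exprn_ge0.
  apply: ler_wiXn2l => //.
  by rewrite -[X in (X <= _)%N]c2i; apply: subset_leq_card; apply: subsetUl.
rewrite big_split /= sumr_const -mulr_suml mulr_natl lerD2l.
apply: ler_wpM2r; first exact: exprn_ge0.
apply: le_trans (sum_ind_le _ _) _.
by rewrite ler_nat card_Jov.
Qed.


Lemma Cc_gt0 : 0 < Cc.
Proof. by rewrite /Cc ltr0n muln_gt0 addn_gt0. Qed.

Lemma part2_lower :
  (#|I|%:R * p ^+ 2) / (2 * (#|I|%:R * p ^+ 2 + Cc)) <= gnp_prob p (other_kfactor k Hs).
Proof.
set x := #|I|%:R * p ^+ 2.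
have x0 : 0 <= x by rewrite mulr_ge0 ?ler0n // exprn_ge0.
have C0 := Cc_gt0.
have xC : 0 < x + Cc by rewrite ltr_wpDl.
set s := (x + Cc)^-1.
have s0 : 0 <= s by rewrite invr_ge0 ltW.
have h := Ex_le p0 p1 (pointwise s).
rewrite (Ex_lin p s (s ^+ 2 / 2) tt (fun S => tt S ^+ 2)) Ex_tt -/x in h.
rewrite gnpE; apply: le_trans h.
have h2 := Ex_tt2_le.
have e2 : #|I|%:R * (#|I|%:R * p ^+ 4 + Cc * p ^+ 2) = x ^+ 2 + Cc * x.
  by rewrite /x; ring.
rewrite e2 in h2.
have hs2 : 0 <= s ^+ 2 / 2 by rewrite divr_ge0 // exprn_ge0.
apply: (le_trans (y := s * x - s ^+ 2 / 2 * (x ^+ 2 + Cc * x))); last first.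
  by rewrite lerD2l lerN2 ler_wpM2l.
rewrite le_eqVlt; apply/orP; left; apply/eqP.
by rewrite /s alg_id // gt_eqF.
Qed.

End Part2.

Local Open Scope ring_scope.

Lemma exists_f n k (Hs : {set {set 'I_n}}) : (0 < k)%N -> is_kfactor k Hs ->
  exists f : 'I_n -> 'I_n, forall a, [set a; f a] \in Hs.
Proof.
move=> k0 kS; move: (kS) => /andP[sSE /forallP dS].
apply: (@fin_all_exists _ (fun _ => 'I_n) (fun a b => [set a; b] \in Hs)) => a.
have : (0 < #|[set e in Hs | a \in e]|)%N by rewrite (eqP (dS a)).
rewrite card_gt0 => /set0Pn[e]; rewrite inE => /andP[eH ae].
have := subsetP sSE e eH; rewrite inE => /cards2P[x [y [_ exy]]].
move: ae; rewrite exy !inE => /orP[/eqP ->|/eqP ->].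
  by exists y; rewrite -exy.
by exists x; rewrite setUC -exy.
Qed.

Lemma mono_frac (R : realType) (x0 x C : R) : 0 < x0 -> x0 <= x -> 0 < C ->
  x0 / (2 * (x0 + C)) <= x / (2 * (x + C)).
Proof.
move=> h0 h1 hC.
have a : 0 < x0 + C by rewrite addr_gt0.
have b : 0 < x + C by rewrite addr_gt0 // (lt_le_trans h0 h1).
have -> : x / (2 * (x + C)) = x0 / (2 * (x0 + C)) + C * (x - x0) / (2 * (x + C) * (x0 + C)).
  by field; rewrite ?gt_eqF.
rewrite lerDl; apply: divr_ge0.
  by apply: mulr_ge0; [exact: ltW | rewrite subr_ge0].
by apply: mulr_ge0; [apply: mulr_ge0 => //; exact: ltW | exact: ltW].
Qed.

Lemma x_lower (R : realType) (n K N : nat) (c0 lam : R) :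
  (2 * K <= n)%N -> (0 < n)%N -> (n * (n - K) <= N)%N -> 0 < c0 -> c0 <= lam ->
  c0 ^+ 2 / 2 <= N%:R * (lam / n%:R) ^+ 2.
Proof.
move=> hK n0 hN c0p hl.
have nR : 0 < (n%:R : R) by rewrite ltr0n.
have h1 : (n * (n - K))%:R * (c0 / n%:R) ^+ 2 <= N%:R * (lam / n%:R) ^+ 2.
  have c00 : 0 <= c0 by exact: ltW.
  have n00 : 0 <= (n%:R : R) by exact: ltW.
  apply: ler_pM.
  - by rewrite ler0n.
  - by rewrite exprn_ge0 // divr_ge0.
  - by rewrite ler_nat.
  apply: lerXn2r; rewrite ?nnegrE.
  - by rewrite divr_ge0.
  - by rewrite divr_ge0 // (le_trans c00 hl).
  by rewrite ler_pM2r // invr_gt0.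
apply: le_trans h1.
have hK' : (n%:R : R) <= 2 * (n - K)%:R.
  rewrite -(natrM R 2) ler_nat; lia.
have -> : (n * (n - K))%:R * (c0 / n%:R) ^+ 2 = (n - K)%:R * c0 ^+ 2 / n%:R.
  by rewrite natrM; field; rewrite gt_eqF.
rewrite ler_pdivlMr //.
have cc : 0 <= c0 ^+ 2 / 2 by rewrite divr_ge0 // exprn_ge0 // ltW.
apply: (le_trans (y := c0 ^+ 2 / 2 * (2 * (n - K)%:R))); first by rewrite ler_wpM2l.
rewrite le_eqVlt; apply/orP; left; apply/eqP; by field.
Qed.

Local Open Scope ring_scope.
Unset Implicit Arguments.

Theorem mainTheorem2 (R : realType) (k : nat) (lam : nat -> R) :
  (0 < k)%N ->
  (forall n : nat, 0 <= lam n <= n%:R) ->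
  (* (i) lambda = o(1) *)
  ((forall eps : R, 0 < eps ->
      exists N : nat, forall n : nat, (N <= n)%N -> lam n <= eps) ->
   forall eps : R, 0 < eps ->
     exists N : nat, forall (n : nat) (Hs : {set {set 'I_n}}),
       (N <= n)%N -> is_kfactor k Hs ->
       gnp_prob (lam n / n%:R) (other_kfactor k Hs) <= eps)
  /\
  (* (ii) lambda = Omega(1) *)
  ((exists c0 : R, 0 < c0 /\
      exists N : nat, forall n : nat, (N <= n)%N -> c0 <= lam n) ->
   exists c : R, 0 < c /\
     exists N : nat, forall (n : nat) (Hs : {set {set 'I_n}}),
       (N <= n)%N -> is_kfactor k Hs ->
       c <= gnp_prob (lam n / n%:R) (other_kfactor k Hs)).
Proof.
move=> k0 hlam; split.
- move=> hsmall eps eps0.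
  have kR : 0 < (k%:R : R) by rewrite ltr0n.
  set e' := Num.min eps 1 / (128 * k%:R).
  have e'0 : 0 < e' by rewrite divr_gt0 // ?lt_min ?eps0 ?ltr01 // mulr_gt0.
  have [N hN] := hsmall e' e'0.
  exists (maxn N 1) => n Hs; rewrite geq_max => /andP[nN n1] kS.
  have /andP[l0 ln] := hlam n.
  have hl := hN n nN.
  have hmin1 : Num.min eps 1 <= 1 by rewrite ge_min lexx orbT.
  have hmin2 : Num.min eps 1 <= eps by rewrite ge_min lexx.
  have key : 2 * (64 * k%:R * lam n) <= Num.min eps 1.
    have : lam n * (128 * k%:R) <= Num.min eps 1.
      by rewrite -ler_pdivlMr // mulr_gt0.
    move=> h; apply: le_trans h; rewrite le_eqVlt; apply/orP; left; apply/eqP; ring.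
  apply: le_trans (part1_bound n1 l0 ln kS (le_trans key hmin1)) _.
  exact: le_trans key hmin2.
- move=> [c0 [c0p [N0 hN0]]].
  set x0 := c0 ^+ 2 / 2.
  have x0p : 0 < x0 by rewrite divr_gt0 // exprn_gt0.
  exists (x0 / (2 * (x0 + Cc R k))); split.
    by rewrite divr_gt0 // mulr_gt0 // addr_gt0 // Cc_gt0.
  exists (maxn N0 (maxn (2 * Kb k) 1)) => n Hs.
  rewrite !geq_max => /and3P[nN hK n1] kS.
  have [f hf] := exists_f k0 kS.
  have /andP[l0 ln] := hlam n.
  have nR : 0 < (n%:R : R) by rewrite ltr0n.
  have p0 : 0 <= lam n / n%:R by rewrite divr_ge0 // ltW.
  have p1 : lam n / n%:R <= 1 by rewrite ler_pdivrMr // mul1r.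
  have hx := x_lower hK n1 (card_valid kS hf) c0p (hN0 n nN).
  apply: le_trans _ (part2_lower kS hf p0 p1).
  exact: mono_frac x0p hx (Cc_gt0 R k).
Qed.
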